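(* Every twofold partition having a representation in Model $F^{\underline u}$ has a representation in Model $F^{u}$, and there exist a finite product set $X$ and a (linear) twofold partition of $X$ satisfying the standing assumptions that has a representation in Model $F^{u}$ but none in Model $F^{\underline u}$.
   Context: Setting. $N=\{1,\dots,n\}$, $n\ge2$; $X=X_1\times\dots\times X_n$, each $X_i$ finite. $(y_i,x_{-i})$ denotes $x$ with $i$-th coordinate replaced by $y_i$. A twofold partition $\langle\mathcal A,\mathcal U\rangle$ of $X$: disjoint sets with union $X$. Define $x_i\succsim_i y_i$ iff [for all $a_{-i}\in\prod_{j\ne i}X_j$, $(y_i,a_{-i})\in\mathcal A\Rightarrow(x_i,a_{-i})\in\mathcal A$]. Standing assumptions: every attribute is influential (exist $x_i,y_i,a_{-i}$ with $(x_i,a_{-i})\in\mathcal A$, $(y_i,a_{-i})\in\mathcal U$) and each $\succsim_i$ is antisymmetric. $x\succsim y$ iff $x_i\succsim_i y_i$ for all $i$. Model $F^{u}$: there are semiorders $S_i$ on $X_i$ (reflexive, Ferrers: $xS_iy, zS_iw\Rightarrow xS_iw$ or $zS_iy$; semitransitive: $xS_iy, yS_iz\Rightarrow xS_iw$ or $wS_iz$), the relation $S$ on $X$ given by $xSy$ iff $x_iS_iy_i$ for all $i\in N$ with asymmetric part $P$, and a set $\mathcal P\subseteq X$ with no $p,q\in\mathcal P$ satisfying $pPq$, such that for all $x$: $x\in\mathcal U$ iff [$pPx$ for some $p\in\mathcal P$ and not $xPq$ for all $q\in\mathcal P$]. Model $F^{\underline u}$: Model $F^{u}$ with a representation in which $S_i=\succsim_i$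 for all $i$. *)

(* Defs.v *)
From mathcomp Require Import all_boot.
Set Implicit Arguments. Unset Strict Implicit. Unset Printing Implicit Defensive.

Section TwofoldPartitions.
Variables (n : nat) (T : 'I_n -> finType).

Definition point := forall i : 'I_n, T i.

(* A twofold partition <A, U> is given by the set A; U is its complement. *)
Variable A : point -> Prop.
Definition inU (x : point) : Prop := ~ A x.

Definition agree_off (i : 'I_n) (a b : point) : Prop :=
  forall j, j != i -> a j = b j.

Definition pref (i : 'I_n) (xi yi : T i) : Prop :=
  forall a b : point, agree_off i a b -> a i = yi -> b i = xi -> A a -> A b.

Definition influential (i : 'I_n) : Prop :=
  exists a b : point, agree_off i a b /\ A a /\ inU b.

Definition antisym_pref (i : 'I_n) : Prop :=
  forall x y : T i, pref x y -> pref y x -> x = y.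

Definition standing_assumptions : Prop :=
  forall i, influential i /\ antisym_pref i.

(* A twofold partition is linear when every >=_i is complete
   (hence, being antisymmetric, a linear order). *)
Definition linear_partition : Prop :=
  forall i (x y : T i), pref x y \/ pref y x.

Definition semiorder (Y : Type) (R : Y -> Y -> Prop) : Prop :=
  (forall x, R x x) /\
  (forall x y z w, R x y -> R z w -> R x w \/ R z y) /\
  (forall x y z w, R x y -> R y z -> R x w \/ R w z).

Definition prodS (S : forall i, T i -> T i -> Prop) (x y : point) : Prop :=
  forall i, S i (x i) (y i).

Definition prodP (S : forall i, T i -> T i -> Prop) (x y : point) : Prop :=
  prodS S x y /\ ~ prodS S y x.

Definition Fu_rep (S : forall i, T i -> T i -> Prop) (Pset : point -> Prop) : Prop :=
  (forall i, semiorder (S i)) /\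
  (forall p q, Pset p -> Pset q -> ~ prodP S p q) /\
  (forall x, inU x <->
     ((exists p, Pset p /\ prodP S p x) /\ (forall q, Pset q -> ~ prodP S x q))).

Definition model_Fu : Prop := exists S Pset, Fu_rep S Pset.

Definition model_Fuu : Prop := exists Pset, Fu_rep pref Pset.

End TwofoldPartitions.

(* Main.v *)
Require Import Defs.
From mathcomp Require Import all_boot.
Set Implicit Arguments. Unset Strict Implicit. Unset Printing Implicit Defensive.

Definition T3 : 'I_3 -> finType := fun _ => 'I_3.
Definition pt := point T3.
Definition trip (p : pt) : nat * nat * nat :=
  (val (p ord0 : 'I_3), val (p (inord 1) : 'I_3), val (p (inord 2) : 'I_3)).
Definition coord (k : nat) (t : nat * nat * nat) : nat :=
  match k with 0 => t.1.1 | 1 => t.1.2 | _ => t.2 end.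
Definition setc (k x : nat) (t : nat * nat * nat) : nat * nat * nat :=
  match k with 0 => (x, t.1.2, t.2) | 1 => (t.1.1, x, t.2) | _ => (t.1.1, t.1.2, x) end.
Definition mkn (t : nat * nat * nat) : pt := fun j => (inord (coord (val j) t) : 'I_3).
Definition inR3 (t : nat * nat * nat) := (t.1.1 < 3) && (t.1.2 < 3) && (t.2 < 3).

Lemma coord_trip (p : pt) (j : 'I_3) : val (p j : 'I_3) = coord (val j) (trip p).
Proof.
case: j => [[|[|[|m]]] H] //=; rewrite /trip /=; do 2 f_equal; apply: val_inj => /=;
  by rewrite ?inordK.
Qed.

Lemma trip_R3 p : inR3 (trip p).
Proof. by rewrite /inR3 /trip /= !ltn_ord. Qed.

Lemma trip_mkn t : inR3 t -> trip (mkn t) = t.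
Proof.
case: t => [[a b] c] /andP [/andP [ha hb] hc].
by rewrite /trip /mkn /= !inordK.
Qed.

Lemma forall3 (F : nat -> Prop) : (forall i : 'I_3, F (val i)) <-> (F 0 /\ F 1 /\ F 2).
Proof.
split.
  move=> H; split; first exact: (H ord0).
  split; first exact: (H (@Ordinal 3 1 isT)).
  exact: (H (@Ordinal 3 2 isT)).
move=> [H0 [H1 H2]] [[|[|[|m]]] Hi] //.
Qed.

Definition I3 := iota 0 3.
Definition all3 (F : nat * nat * nat -> bool) :=
  all (fun a => all (fun b => all (fun c => F (a, b, c)) I3) I3) I3.
Lemma all3P F : all3 F -> forall t, inR3 t -> F t.
Proof.
move=> H [[a b] c] /andP [/andP [ha hb] hc].
have ia : a \in I3 by rewrite mem_iota leq0n add0n.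
have ib : b \in I3 by rewrite mem_iota leq0n add0n.
have ic : c \in I3 by rewrite mem_iota leq0n add0n.
exact: (allP (allP (allP H a ia) b ib) c ic).
Qed.

Definition An (t : nat * nat * nat) : bool :=
  ((t.1.1 == 1) && (t.1.2 == 2) && (1 <= t.2)) || ((t.1.1 == 2) && ((1 <= t.1.2) || (t.2 == 2))).
Definition Aex (p : pt) : Prop := An (trip p).
Definition leT (s t : nat * nat * nat) := (s.1.1 <= t.1.1) && (s.1.2 <= t.1.2) && (s.2 <= t.2).
Definition R3 : seq (nat * nat * nat) := [seq (ab.1, ab.2, c) | ab <- [seq (a, b) | a <- I3, b <- I3], c <- I3].
Definition has3 (F : nat * nat * nat -> bool) := has F R3.

Lemma mono_b : all3 (fun s => all3 (fun t => leT s t ==> An s ==> An t)).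
Proof. by []. Qed.

Lemma strict_b : all (fun k => all (fun u => all (fun v => (u < v) ==>
   has3 (fun w => inR3 w && (coord k w == v) && An w && ~~ An (setc k u w))) I3) I3) I3.
Proof. by []. Qed.

Lemma inI3 x : x < 3 -> x \in I3.
Proof. by move=> h; rewrite mem_iota leq0n add0n. Qed.

Lemma coord_setc j k x t : j < 3 -> k < 3 -> j != k -> coord j (setc k x t) = coord j t.
Proof. by case: j => [|[|[|j]]] //; case: k => [|[|[|k]]]. Qed.

Lemma coord_setc_same k x t : k < 3 -> coord k (setc k x t) = x.
Proof. by case: k => [|[|[|k]]]. Qed.

Lemma inR3_setc k x t : x < 3 -> inR3 t -> inR3 (setc k x t).
Proof.
case: t => [[a b] c] hx /andP [/andP [ha hb] hc].
by case: k => [|[|k]]; rewrite /inR3 /= ?hx ?ha ?hb ?hc.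
Qed.

Lemma valinord k : k < 3 -> \val (inord k : 'I_3) = k.
Proof. exact: inordK. Qed.

Lemma strict_pts (i : 'I_3) (u v : nat) : u < v -> v < 3 ->
  exists a b : pt, [/\ agree_off i a b, val (a i : 'I_3) = v, val (b i : 'I_3) = u, Aex a & ~ Aex b].
Proof.
move=> huv hv.
have hu : u < 3 by apply: ltn_trans huv hv.
have H := allP (allP (allP strict_b (val i) (inI3 (ltn_ord i))) u (inI3 hu)) v (inI3 hv).
rewrite huv /= in H.
case/hasP: H => w _ /andP [/andP [/andP [Rw /eqP Ew] Aw] nAw].
exists (mkn w), (mkn (setc (val i) u w)); split.
- move=> j Hj; apply: val_inj; rewrite /mkn /= coord_setc // ?ltn_ord //.
- by rewrite /mkn valinord Ew.
- by rewrite /mkn valinord coord_setc_same ?ltn_ord.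
- by rewrite /Aex trip_mkn.
- by rewrite /Aex trip_mkn ?inR3_setc //; apply/negP.
Qed.

Lemma leT_coord (a b : pt) : (forall j : 'I_3, val (a j : 'I_3) <= val (b j : 'I_3)) -> leT (trip a) (trip b).
Proof.
move=> H.
have HH : forall j : 'I_3, (fun k => coord k (trip a) <= coord k (trip b)) (val j).
  by move=> j /=; rewrite -!coord_trip; exact: H j.
have [H0 [H1 H2]] := (forall3 (fun k => coord k (trip a) <= coord k (trip b))).1 HH.
by rewrite /leT H0 H1 H2.
Qed.

Lemma pref_iff (i : 'I_3) (u v : T3 i) : pref Aex u v <-> val (v : 'I_3) <= val (u : 'I_3).
Proof.
split.
- move=> Hp; rewrite leqNgt; apply/negP => Hlt.
  have [a [b [Hab Ha Hb HA HnB]]] := strict_pts i Hlt (ltn_ord v).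
  apply: HnB; apply: (Hp a b Hab) => //; apply: val_inj => //.
- move=> Hvu a b Hab Ha Hb HA.
  have Hm := implyP (implyP (all3P (all3P mono_b (trip_R3 a)) (trip_R3 b)) _) HA.
  apply: Hm; apply: leT_coord => j.
  case E: (j == i).
  + move/eqP: E => E; subst j; by rewrite Ha Hb.
  + by rewrite Hab // E.
Qed.

From mathcomp Require Import zify.

Lemma standing : standing_assumptions Aex.
Proof.
move=> i; split.
- have [a [b [Hab _ _ Ha Hb]]] := strict_pts i (isT : 0 < 1) (isT : 1 < 3).
  by exists a, b.
- move=> x y /pref_iff Hxy /pref_iff Hyx; apply: val_inj; apply/eqP.
  by rewrite eqn_leq Hxy Hyx.
Qed.

Lemma linear : linear_partition Aex.
Proof.
move=> i x y; case: (leqP (val (y : 'I_3)) (val (x : 'I_3))) => H.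
- by left; apply/pref_iff.
- by right; apply/pref_iff; apply: ltnW.
Qed.

Definition Sn (k a b : nat) : bool := if k == 2 then b <= a.+1 else b <= a.
Definition Srel : forall i : 'I_3, T3 i -> T3 i -> Prop :=
  fun i a b => Sn (val i) (val (a : 'I_3)) (val (b : 'I_3)).

Lemma Sn_semi k : (forall x, Sn k x x) /\
  (forall x y z w, Sn k x y -> Sn k z w -> Sn k x w \/ Sn k z y) /\
  (forall x y z w, Sn k x y -> Sn k y z -> Sn k x w \/ Sn k w z).
Proof.
rewrite /Sn; case: (k == 2); split; try split; move=> *; lia.
Qed.

Lemma Srel_semi i : semiorder (@Srel i).
Proof.
have [H1 [H2 H3]] := Sn_semi (val i).
split; [|split]; rewrite /Srel.
- move=> x; exact: H1.
- move=> x y z w; exact: H2.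
- move=> x y z w; exact: H3.
Qed.

Definition prodSn (s t : nat * nat * nat) :=
  Sn 0 s.1.1 t.1.1 && Sn 1 s.1.2 t.1.2 && Sn 2 s.2 t.2.
Definition prodPn s t := prodSn s t && ~~ prodSn t s.
Definition geT (s t : nat * nat * nat) := leT t s.
Definition prodPge s t := geT s t && ~~ geT t s.

Lemma prodS_gen (R : forall i : 'I_3, T3 i -> T3 i -> Prop) (F : nat -> nat -> nat -> bool) :
  (forall i (a b : T3 i), R i a b <-> F (val i) (val (a : 'I_3)) (val (b : 'I_3))) ->
  forall p q : pt, prodS R p q <->
     [&& F 0 (trip p).1.1 (trip q).1.1, F 1 (trip p).1.2 (trip q).1.2 & F 2 (trip p).2 (trip q).2].
Proof.
move=> HR p q; split.
- move=> H.
  have HH : forall j : 'I_3, (fun k => F k (coord k (trip p)) (coord k (trip q))) (val j).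
    by move=> j /=; rewrite -!coord_trip; apply/HR; exact: H j.
  have [H0 [H1 H2]] := (forall3 (fun k => F k (coord k (trip p)) (coord k (trip q)))).1 HH.
  by rewrite /= in H0 H1 H2; rewrite H0 H1 H2.
- move=> /and3P [H0 H1 H2] j; apply/HR; rewrite !coord_trip.
  have := (forall3 (fun k => F k (coord k (trip p)) (coord k (trip q)))).2 (conj H0 (conj H1 H2)) j.
  by [].
Qed.

Lemma prodS_S p q : prodS Srel p q <-> prodSn (trip p) (trip q).
Proof.
have := @prodS_gen (@Srel) Sn (fun i a b => iff_refl _) p q.
by rewrite /prodSn -andbA.
Qed.

Lemma prodS_pref p q : prodS (pref Aex) p q <-> geT (trip p) (trip q).
Proof.
have := @prodS_gen (pref Aex) (fun _ a b => b <= a) (fun i a b => pref_iff a b) p q.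
by rewrite /geT /leT -andbA.
Qed.

Lemma prodP_gen R (f : nat * nat * nat -> nat * nat * nat -> bool) :
  (forall p q, prodS R p q <-> f (trip p) (trip q)) ->
  forall p q, prodP R p q <-> (f (trip p) (trip q) && ~~ f (trip q) (trip p)).
Proof.
move=> H p q; split.
- by move=> [/H -> H2] /=; apply/negP => /H.
- by move=> /andP [/H H1 H2]; split => // /H; apply/negP.
Qed.

Definition Plist : seq (nat * nat * nat) := [:: (1,2,1); (1,2,2); (2,0,2); (2,1,0)].
Definition Pset (p : pt) : Prop := trip p \in Plist.

Lemma anti_b : all (fun s => all (fun t => ~~ prodPn s t) Plist) Plist.
Proof. by []. Qed.
Lemma c3a_b : all3 (fun t => ~~ An t ==> has (fun p => prodPn p t) Plist && all (fun q => ~~ prodPn t q) Plist).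
Proof. by []. Qed.
Lemma c3b_b : all3 (fun t => An t ==> all (fun p => ~~ prodPn p t) Plist || has (fun q => prodPn t q) Plist).
Proof. by []. Qed.
Lemma Plist_R3 : all inR3 Plist.
Proof. by []. Qed.
Lemma key_b : all3 (fun t => An t && prodPge t (1,1,2) ==>
  has3 (fun m => inR3 m && An m && prodPge t m && all3 (fun q => An q ==> ~~ prodPge m q))).
Proof. by []. Qed.

Lemma Fu_ex : model_Fu Aex.
Proof.
exists (@Srel), Pset; split; [exact: Srel_semi | split].
- move=> p q Hp Hq /(prodP_gen prodS_S) H.
  by have := allP (allP anti_b _ Hp) _ Hq; rewrite /prodPn H.
- move=> x; split.
  + move=> Hu.
    have Hn : ~~ An (trip x) by apply/negP.
    have := implyP (all3P c3a_b (trip_R3 x)) Hn.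
    case/andP => /hasP [p Pp Hpx] /allP Hq; split.
    * exists (mkn p); split.
        by rewrite /Pset trip_mkn ?(allP Plist_R3 p Pp).
      by apply/(prodP_gen prodS_S); rewrite trip_mkn ?(allP Plist_R3 p Pp).
    * move=> q Hq' /(prodP_gen prodS_S) H.
      by have := Hq _ Hq'; rewrite /prodPn H.
  + move=> [[p [Pp Hpx]] Hq] HA.
    have := implyP (all3P c3b_b (trip_R3 x)) HA.
    case/orP.
    * move/allP/(_ _ Pp).
      by rewrite /prodPn ((prodP_gen prodS_S p x).1 Hpx).
    * case/hasP => q Qq Hxq.
      apply: (Hq (mkn q)).
        by rewrite /Pset trip_mkn ?(allP Plist_R3 q Qq).
      by apply/(prodP_gen prodS_S); rewrite trip_mkn ?(allP Plist_R3 q Qq).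
Qed.

Lemma notFuu : ~ model_Fuu Aex.
Proof.
move=> [P [_ [Hanti H3]]].
have PinA : forall p, P p -> Aex p.
  move=> p Pp; rewrite /Aex; apply/negPn/negP => Hn.
  have Hu : inU Aex p by apply/negP.
  have [[p' [Pp' Hp'p]] _] := (H3 p).1 Hu.
  exact: (Hanti p' p Pp' Pp Hp'p).
have Hu0 : inU Aex (mkn (1,1,2)) by rewrite /inU /Aex trip_mkn.
have [[p [Pp Hpx]] _] := (H3 _).1 Hu0.
have Hb := (prodP_gen prodS_pref p _).1 Hpx.
rewrite trip_mkn // in Hb.
have := implyP (all3P key_b (trip_R3 p)).
rewrite PinA // /prodPge Hb => /(_ isT).
case/hasP => m _ /andP [/andP [/andP [Rm Am] Hpm] Hmq].
have : inU Aex (mkn m).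
  apply/(H3 (mkn m)).2; split.
    by exists p; split => //; apply/(prodP_gen prodS_pref); rewrite trip_mkn.
  move=> q Pq /(prodP_gen prodS_pref); rewrite trip_mkn // => Hmq'.
  by have := implyP (all3P Hmq (trip_R3 q)) (PinA q Pq); rewrite Hmq'.
by rewrite /inU /Aex trip_mkn.
Qed.

Theorem proposition4 :
  (forall (n : nat) (T : 'I_n -> finType) (A : point T -> Prop),
      1 < n -> standing_assumptions A -> model_Fuu A -> model_Fu A) /\
  (exists (n : nat) (T : 'I_n -> finType) (A : point T -> Prop),
      [/\ 1 < n, standing_assumptions A, linear_partition A,
          model_Fu A & ~ model_Fuu A]).
Proof.
split.
- move=> n T A _ _ [P HP]; by exists (pref A), P.
- exists 3, T3, Aex; split => //.
  + exact: standing.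
  + exact: linear.
  + exact: Fu_ex.
  + exact: notFuu.
Qed.
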